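(* Let $G$ be a pro-oligomorphic group and $U$ an open subgroup. Let $n(U)$ be the supremum of the set of $n\in\mathbf{N}$ for which there is a strict chain of subgroups $U=U_0\subsetneq U_1\subsetneq\cdots\subsetneq U_n\subset G$. Then $n(U)$ is finite; in fact $n(U)$ is at most the cardinality of the double coset space $U\backslash G/U$.
   Context: A pro-oligomorphic group is a topological group that is Hausdorff, non-archimedean (open subgroups form a neighborhood basis of the identity), and Roelcke pre-compact (for any open subgroups $U,V$, the double coset space $U\backslash G/V$ is finite). *)

(* Defs.v *)
From mathcomp Require Import all_boot all_order.
From mathcomp Require Import all_classical all_analysis.
Set Implicit Arguments. Unset Strict Implicit. Unset Printing Implicit Defensive.
Local Open Scope classical_set_scope.

Definition group_law {G : Type} (mul : G -> G -> G) (inv : G -> G) (e : G) :=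
  [/\ (forall x y z, mul x (mul y z) = mul (mul x y) z),
      (forall x, mul e x = x /\ mul x e = x) &
      (forall x, mul (inv x) x = e /\ mul x (inv x) = e)].

Definition topological_group {G : topologicalType}
  (mul : G -> G -> G) (inv : G -> G) (e : G) :=
  [/\ group_law mul inv e,
      continuous (fun p : G * G => mul p.1 p.2) &
      continuous inv].

Definition is_subgroup {G : Type} (mul : G -> G -> G) (inv : G -> G) (e : G)
  (H : set G) :=
  [/\ H e, (forall x y, H x -> H y -> H (mul x y)) & (forall x, H x -> H (inv x))].

Definition open_subgroup {G : topologicalType} (mul : G -> G -> G)
  (inv : G -> G) (e : G) (H : set G) :=
  is_subgroup mul inv e H /\ open H.

Definition double_coset {G : Type} (mul : G -> G -> G) (U V : set G) (x : G) : set G :=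
  [set g | exists u v, U u /\ V v /\ g = mul (mul u x) v].

Definition double_coset_space {G : Type} (mul : G -> G -> G) (U V : set G) : set (set G) :=
  [set D | exists x, D = double_coset mul U V x].

Definition non_archimedean {G : topologicalType} (mul : G -> G -> G)
  (inv : G -> G) (e : G) :=
  forall N : set G, nbhs e N -> exists H, open_subgroup mul inv e H /\ H `<=` N.

Definition roelcke_precompact {G : topologicalType} (mul : G -> G -> G)
  (inv : G -> G) (e : G) :=
  forall U V : set G, open_subgroup mul inv e U -> open_subgroup mul inv e V ->
    finite_set (double_coset_space mul U V).

Definition pro_oligomorphic {G : topologicalType} (mul : G -> G -> G)
  (inv : G -> G) (e : G) :=
  [/\ topological_group mul inv e, hausdorff_space G,
      non_archimedean mul inv e & roelcke_precompact mul inv e].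

Definition strict_subgroup_chain {G : Type} (mul : G -> G -> G) (inv : G -> G)
  (e : G) (U : set G) (n : nat) (C : nat -> set G) :=
  [/\ C 0%N = U,
      (forall i, (i <= n)%N -> is_subgroup mul inv e (C i)) &
      (forall i, (i < n)%N -> C i `<` C i.+1)].

(* Main.v *)
Require Import Defs.
From mathcomp Require Import all_boot all_order.
From mathcomp Require Import all_classical all_analysis.
Local Open Scope classical_set_scope.
Local Open Scope card_scope.

Theorem proposition5p1 (G : topologicalType) (mul : G -> G -> G) (inv : G -> G)
  (e : G) (U : set G) :
  pro_oligomorphic mul inv e -> open_subgroup mul inv e U ->
  exists N : nat,
    double_coset_space mul U U #= `I_N /\
    (forall (n : nat) (C : nat -> set G),
        strict_subgroup_chain mul inv e U n C -> (n <= N)%N).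
Proof.
move=> [[glaw _ _] _ _ RP] oU.
have [N HN] := RP U U oU oU.
exists N; split => // n C [C0 Csub Cstr].
have [_ idl _] := glaw.
have [[Ue Umul _] _] := oU.
rewrite card_eq_sym in HN.
have [f [ffun finj fsurj]] := card_set_bijP HN.
have UC : forall j, (j <= n)%N -> U `<=` C j.
  elim=> [|j IH] Hj; first by rewrite C0.
  have [+ _] := Cstr j Hj.
  by apply: subset_trans; apply: IH; apply: ltnW.
pose g (k : 'I_N) : set G := f (nat_of_ord k).
pose S (i : nat) : {set 'I_N} := finset (fun k => `[< g k `<=` C i >]%type).
have dcC : forall j x, (j <= n)%N -> C j x -> double_coset mul U U x `<=` C j.
  move=> j x Hj Cx y [u [v [Uu [Uv ->]]]].
  have [_ Cm _] := Csub j Hj.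
  by apply: (Cm); [apply: (Cm) => //|]; apply: UC.
have getk : forall x, exists k : 'I_N, g k = double_coset mul U U x.
  move=> x.
  have : double_coset_space mul U U (double_coset mul U U x) by exists x.
  move=> /fsurj [k /= kN fk].
  exists (Ordinal (kN : (k < N)%N)); exact: fk.
have incr : forall j, (j < n)%N -> S j \proper S j.+1.
  move=> j Hj; have [sub nsub] := Cstr j Hj.
  apply/fintype.properP; split.
    apply/fintype.subsetP => k; rewrite !inE /= => H.
    exact: subset_trans H sub.
  have [x Cx1 nCx] : exists2 x, C j.+1 x & ~ C j x.
    apply: contrapT => H; apply: nsub => x Cx.
    by apply: contrapT => nCx; apply: H; exists x.
  have [k gk] := getk x.
  exists k; rewrite !inE /=.
    by rewrite gk; apply: dcC.
  rewrite gk; apply/negP => /asboolW H; apply: nCx; apply: H.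
  exists e, e; split => //; split => //.
  by have [-> _] := idl x; have [_ ->] := idl x.
have cardS : forall j, (j <= n)%N -> (j < #|S j|)%N.
  elim=> [|j IH] Hj.
    have [k gk] := getk e.
    rewrite card_gt0; apply/finset.set0Pn; exists k; rewrite inE /=.
    by apply: asboolT; rewrite gk; apply: (dcC 0%N e) => //; rewrite C0.
  apply: (leq_ltn_trans (IH (ltnW Hj))).
  exact: proper_card (incr j Hj).
have H := cardS n (leqnn n).
have H2 : (#|S n| <= N)%N.
  have := max_card (pred_of_set (S n)). rewrite card_ord. done.
exact: ltnW (leq_trans H H2).
Qed.
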